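(* Let $\sim$ denote either $\cong$ or $\simeq$. If $\gamma\vdash\top\preceq A$ is derivable for some subtyping assumption $\gamma$, then $A\sim\top$.
   Context: Type expressions: fix a countably infinite set of type variables $X,Y,Z,\dots$. Pseudo type expressions are generated by $A::=X\mid A\to A\mid \bullet A\mid \mu X.A$ ($\mu$ binds $X$; $\alpha$-convertible expressions are identified; $\to$ associates to the right; $\bullet$ binds tighter than $\to$, which binds tighter than $\mu$). $A[B/X]$ denotes capture-avoiding substitution. $\top$ abbreviates $\mu X.\bullet X$, and $\bullet^n A$ denotes $A$ prefixed by $n$ copies of $\bullet$. The tail $t(A)$ is defined by $t(X)=X$, $t(A\to B)=t(B)$, $t(\bullet A)=\bullet t(A)$, $t(\mu X.A)=\mu X.t(A)$; it always has the form $\bullet^{m_0}\mu X_1.\bullet^{m_1}\mu X_2.\cdots\mu X_n.\bullet^{m_n}Y$. $A$ is a $\top$-variant iff $Y=X_i$ for some $1\le i\le n$ with $X_i\notin\{X_{i+1},\dots,X_n\}$ and $m_i+\dots+m_n\ge 1$. $A$ is proper in $X$ iff: a variable $Y$ is proper in $X$ iff $Y\neq X$; $\bullet A$ is always proper in $X$; $A\to B$ is proper in $X$ iff both $A,B$ are proper in $X$ or $B$ is a $\top$-variant; for $Y\ne X$, $\mu Y.A$ is proper in $X$ iff $A$ is proper in $X$ or $\mu Y.A$ is a $\top$-variant. Type expressions are the least set of pseudo type expressions containing all type variables, closed under $\to$ and $\bullet$, and containing $\mu X.A$ whenever it contains $A$ and $A$ is proper in $X$. Equality: $\cong$ is the least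 relation on type expressions such that: $A\cong A$; $A\cong B$ implies $B\cong A$; $A\cong B$ and $B\cong C$ imply $A\cong C$; $A\cong B$ implies $\bullet A\cong\bullet B$; $A\cong C$ and $B\cong D$ imply $A\to B\cong C\to D$; $A\to\top\cong\top$; $\mu X.A\cong A[\mu X.A/X]$; and if $A\cong C[A/X]$ with $C$ proper in $X$, then $A\cong\mu X.C$. $\simeq$ is the least relation satisfying the same closure conditions and additionally $\bullet(A\to B)\simeq\bullet A\to\bullet B$. Subtyping: a subtyping assumption $\gamma$ is a finite set of pairs $X\preceq Y$ of type variables in which each type variable occurs at most once; $FTV(\gamma)$ is the set of variables occurring in it. Judgments $\gamma\vdash A\preceq B$ are derived by the rules: $\gamma\cup\{X\preceq Y\}\vdash X\preceq Y$; $\gamma\vdash A\preceq\top$; from $A\simeq B$ infer $\gamma\vdash A\preceq B$; from $\gamma_1\vdash A\preceq B$ and $\gamma_2\vdash B\preceq C$ infer $\gamma_1\cup\gamma_2\vdash A\preceq C$; from $\gamma\vdash A\preceq B$ infer $\gamma\vdash\bullet A\preceq\bullet B$; from $\gamma_1\vdash A'\preceq A$ and $\gamma_2\vdash B\preceq B'$ infer $\gamma_1\cup\gamma_2\vdash A\to B\preceq A'\to B'$; from $\gamma\cup\{X\preceq Y\}\vdash A\preceq B$ infer $\gamma\vdash\mu X.A\preceq\mu Y.B$, provided $X\notin FTV(\gamma)\cup FTV(B)$, $Y\notin FTV(\gamma)\cup FTV(A)$, $A$ is proper in $X$ and $B$ is proper in $Y$; and $\gamma\vdash A\preceq\bullet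 A$. All sets $\gamma\cup\{X\preceq Y\}$, $\gamma_1\cup\gamma_2$ must be well-formed subtyping assumptions. $A\preceq B$ means $\{\}\vdash A\preceq B$ is derivable. *)

(* Defs.v *)
(* Locally nameless representation of the (pseudo) type
   expressions: free type variables are names (nat, a countably infinite
   set), variables bound by mu are de Bruijn indices.  Alpha-convertible
   expressions are thus identified syntactically. *)
From Stdlib Require Import List Arith.
Import ListNotations.

Inductive ty : Type :=
| tfvar (X : nat)
| tbvar (i : nat)
| tarr (A B : ty)
| tbul (A : ty)
| tmu (A : ty).            (* mu X. A, body with index 0 for X *)

(* opening: replace bound index k by u (capture-avoiding substitution
   A[u/X] when A = open a X) *)
Fixpoint open_rec (k : nat) (u : ty) (t : ty) : ty :=
  match t with
  | tfvar X => tfvar X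
  | tbvar i => if Nat.eqb i k then u else tbvar i
  | tarr A B => tarr (open_rec k u A) (open_rec k u B)
  | tbul A => tbul (open_rec k u A)
  | tmu A => tmu (open_rec (S k) u A)
  end.

Definition open (t u : ty) : ty := open_rec 0 u t.

Fixpoint fv (t : ty) : list nat :=
  match t with
  | tfvar X => [X]
  | tbvar _ => []
  | tarr A B => fv A ++ fv B
  | tbul A => fv A
  | tmu A => fv A
  end.

Definition top : ty := tmu (tbul (tbvar 0)).

(* The tail t(A) is bullet^m0 mu X1. ... mu Xn. bullet^mn Y.
   tinfo computes, bottom-up along the tail, whether the final variable Y is
   free, or bound (relative index, and whether a bullet has been passed since
   Y), or already resolved to its binder X_i (with the flag recording
   m_i + ... + m_n >= 1). *)
Inductive tres : Type :=
| TFree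
| TBound (k : nat) (g : bool)
| TResolved (g : bool).

Fixpoint tinfo (t : ty) : tres :=
  match t with
  | tfvar _ => TFree
  | tbvar k => TBound k false
  | tarr _ B => tinfo B
  | tbul A => match tinfo A with
              | TBound k _ => TBound k true
              | r => r
              end
  | tmu A => match tinfo A with
             | TBound 0 g => TResolved g
             | TBound (S k) g => TBound k g
             | r => r
             end
  end.

Definition topvariant (t : ty) : Prop := tinfo t = TResolved true.

(* A is proper in the (free) variable X.  Bound variables are always distinct
   from X (they can be renamed apart), hence proper. *)
Fixpoint proper (X : nat) (t : ty) : Prop :=
  match t with
  | tfvar Y => Y <> X
  | tbvar _ => True
  | tbul _ => True
  | tarr A B => (proper X A /\ proper X B) \/ topvariant B
  | tmu A => proper X A \/ topvariant (tmu A)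
  end.

Inductive texp : ty -> Prop :=
| te_var X : texp (tfvar X)
| te_arr A B : texp A -> texp B -> texp (tarr A B)
| te_bul A : texp A -> texp (tbul A)
| te_mu A :
    (forall X, ~ In X (fv A) ->
       texp (open A (tfvar X)) /\ proper X (open A (tfvar X))) ->
    texp (tmu A).

(* Equality.  teq false is the relation ≅, teq true is ≃ (which additionally
   has bullet (A -> B) ≃ bullet A -> bullet B). *)
Inductive teq (d : bool) : ty -> ty -> Prop :=
| teq_refl A : texp A -> teq d A A
| teq_sym A B : teq d A B -> teq d B A
| teq_trans A B C : teq d A B -> teq d B C -> teq d A C
| teq_bul A B : teq d A B -> teq d (tbul A) (tbul B)
| teq_arr A B C D : teq d A C -> teq d B D -> teq d (tarr A B) (tarr C D)
| teq_arrtop A : texp A -> teq d (tarr A top) top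
| teq_unfold A : texp (tmu A) -> teq d (tmu A) (open A (tmu A))
| teq_contract A C :
    texp (tmu C) ->                 (* C is proper in X, mu X.C a type expr *)
    teq d A (open C A) ->
    teq d A (tmu C)
| teq_dist A B : d = true -> texp A -> texp B ->
    teq d (tbul (tarr A B)) (tarr (tbul A) (tbul B)).

Notation tcong := (teq false).
Notation tsim := (teq true).

(* Subtyping assumptions: finite sets of pairs X ≼ Y, represented by lists;
   well-formed iff each variable occurs at most once. *)
Definition ftv (g : list (nat * nat)) : list nat :=
  flat_map (fun p => [fst p; snd p]) g.

Definition wfg (g : list (nat * nat)) : Prop := NoDup (ftv g).

Definition is_union (g g1 g2 : list (nat * nat)) : Prop :=
  forall p, In p g <-> In p g1 \/ In p g2.

(* Subtyping judgments  g ⊢ A ≼ B.  Every context occurring is well-formed;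
   judgments only depend on the set of pairs in g. *)
Inductive sub : list (nat * nat) -> ty -> ty -> Prop :=
| sub_hyp g X Y : wfg g -> In (X, Y) g -> sub g (tfvar X) (tfvar Y)
| sub_top g A : wfg g -> texp A -> sub g A top
| sub_eq g A B : wfg g -> tsim A B -> sub g A B
| sub_trans g g1 g2 A B C :
    sub g1 A B -> sub g2 B C -> wfg g -> is_union g g1 g2 -> sub g A C
| sub_bul g A B : sub g A B -> sub g (tbul A) (tbul B)
| sub_arr g g1 g2 A A' B B' :
    sub g1 A' A -> sub g2 B B' -> wfg g -> is_union g g1 g2 ->
    sub g (tarr A B) (tarr A' B')
| sub_mu g g' a b X Y :
    (* mu a = mu X.A with A = open a X, mu b = mu Y.B with B = open b Y *)
    ~ In X (fv a) -> ~ In Y (fv b) ->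
    ~ In X (ftv g) -> ~ In X (fv (open b (tfvar Y))) ->
    ~ In Y (ftv g) -> ~ In Y (fv (open a (tfvar X))) ->
    proper X (open a (tfvar X)) -> proper Y (open b (tfvar Y)) ->
    wfg g' -> is_union g' g [(X, Y)] ->
    sub g' (open a (tfvar X)) (open b (tfvar Y)) ->
    sub g (tmu a) (tmu b)
| sub_later g A : wfg g -> texp A -> sub g A (tbul A).

(* Main.v *)
Require Import Defs.
From Stdlib Require Import List Arith Lia.
Import ListNotations.

Fixpoint size (t:ty) : nat := match t with
 | tfvar _ | tbvar _ => 1
 | tarr A B => S (size A + size B)
 | tbul A => S (size A) | tmu A => S (size A) end.

Lemma size_ind (P : ty -> Prop) :
  (forall t, (forall t', size t' < size t -> P t') -> P t) -> forall t, P t.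
Proof. intros H t. assert (forall n t, size t < n -> P t).
 { induction n; intros. lia. apply H. intros. apply IHn. lia. }
 apply (H0 (S (size t))). lia. Qed.

Lemma size_open_rec : forall t k X, size (open_rec k (tfvar X) t) = size t.
Proof. induction t; simpl; intros; auto. destruct (Nat.eqb i k); auto. Qed.

Fixpoint subst (X:nat) (u:ty) (t:ty) : ty := match t with
 | tfvar Y => if Nat.eqb Y X then u else tfvar Y
 | tbvar i => tbvar i
 | tarr A B => tarr (subst X u A) (subst X u B)
 | tbul A => tbul (subst X u A)
 | tmu A => tmu (subst X u A) end.

Lemma size_subst_var : forall t X Y, size (subst X (tfvar Y) t) = size t.
Proof. induction t; simpl; intros. { destruct (Nat.eqb X X0); reflexivity. } all: rewrite ?IHt1, ?IHt2, ?IHt; reflexivity. Qed.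

Definition lc (u:ty) := forall k w, open_rec k w u = u.

Lemma lc_var X : lc (tfvar X). Proof. intros k w; reflexivity. Qed.
Lemma lc_top : lc top. Proof. intros k w; reflexivity. Qed.

Lemma subst_open_rec : forall t X u v k, lc u ->
  subst X u (open_rec k v t) = open_rec k (subst X u v) (subst X u t).
Proof. induction t; simpl; intros.
- destruct (Nat.eqb X X0); [symmetry; apply H| reflexivity].
- destruct (Nat.eqb i k); reflexivity.
- f_equal; auto.
- f_equal; auto.
- f_equal; auto.
Qed.

Lemma subst_fresh : forall t X u, ~ In X (fv t) -> subst X u t = t.
Proof. induction t; simpl; intros.
- destruct (Nat.eqb_spec X X0); subst; auto. tauto.
- auto.
- rewrite IHt1, IHt2; auto; intro; apply H; apply in_or_app; auto.
- rewrite IHt; auto.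
- rewrite IHt; auto.
Qed.

Lemma subst_open_var : forall t Y u k, ~ In Y (fv t) ->
  subst Y u (open_rec k (tfvar Y) t) = open_rec k u t.
Proof. induction t; simpl; intros.
- destruct (Nat.eqb_spec X Y); subst; auto. tauto.
- destruct (Nat.eqb i k); simpl; auto. rewrite Nat.eqb_refl; auto.
- rewrite IHt1, IHt2; auto; intro; apply H; apply in_or_app; auto.
- rewrite IHt; auto.
- rewrite IHt; auto.
Qed.

Lemma fv_open_sub : forall t k u Z, In Z (fv t) -> In Z (fv (open_rec k u t)).
Proof. induction t; simpl; intros; try contradiction; auto.
- apply in_app_or in H; apply in_or_app; destruct H; auto.
Qed.

Lemma fv_open : forall t k u Z, In Z (fv (open_rec k u t)) -> In Z (fv t) \/ In Z (fv u).
Proof. induction t; simpl; intros; try contradiction; eauto.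
- destruct (Nat.eqb i k); simpl in *; auto.
- apply in_app_or in H; destruct H as [H|H]; [apply IHt1 in H|apply IHt2 in H];
  destruct H; auto; left; apply in_or_app; auto.
Qed.

Lemma fv_subst : forall t X u Z, In Z (fv (subst X u t)) -> (In Z (fv t) /\ Z <> X) \/ In Z (fv u).
Proof. induction t; simpl; intros.
- destruct (Nat.eqb_spec X X0); subst; auto. simpl in H. destruct H as [->|[]]. left; auto.
- contradiction.
- apply in_app_or in H; destruct H as [H|H]; [apply IHt1 in H|apply IHt2 in H];
  destruct H as [[]|]; auto; left; split; auto; apply in_or_app; auto.
- auto.
- auto.
Qed.

Lemma fv_subst2 : forall t V u Z, In Z (fv t) -> Z <> V -> In Z (fv (subst V u t)).
Proof. induction t; simpl; intros V u Z H H0; try contradiction; auto.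
- destruct H as [->|[]]. destruct (Nat.eqb_spec Z V); [congruence|simpl; auto].
- apply in_app_or in H; apply in_or_app; destruct H; auto.
Qed.

Lemma fv_subst3 : forall t V u Z, In V (fv t) -> In Z (fv u) -> In Z (fv (subst V u t)).
Proof. induction t; simpl; intros V u Z H H0; try contradiction; auto.
- destruct H as [->|[]]. rewrite Nat.eqb_refl; auto.
- apply in_app_or in H; apply in_or_app; destruct H; auto.
Qed.

Definition fresh (l : list nat) : nat := S (fold_right Nat.max 0 l).
Lemma fresh_spec l : ~ In (fresh l) l.
Proof. assert (forall x, In x l -> x <= fold_right Nat.max 0 l).
 { induction l; simpl; intros x Hx; [contradiction|]. destruct Hx as [->|Hx]; [lia|].
   specialize (IHl x Hx); lia. }
 intros H'. apply H in H'. unfold fresh in H'. lia. Qed.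

Lemma open_rec_lc_core : forall t i j u v, i <> j ->
  open_rec i u (open_rec j v t) = open_rec j v t -> open_rec i u t = t.
Proof. induction t; simpl; intros; try contradiction; auto.
- repeat match goal with
  | |- context [Nat.eqb ?a ?b] => destruct (Nat.eqb_spec a b)
  | H : context [Nat.eqb ?a ?b] |- _ => destruct (Nat.eqb_spec a b) end;
  subst; simpl in *; try congruence;
  repeat match goal with
  | |- context [Nat.eqb ?a ?b] => destruct (Nat.eqb_spec a b)
  | H : context [Nat.eqb ?a ?b] |- _ => destruct (Nat.eqb_spec a b) end; congruence.
- injection H0; intros; f_equal; eauto.
- injection H0; intros; f_equal; eauto.
- injection H0; intros; f_equal. eapply IHt; [|eauto]. lia.
Qed.

Lemma texp_lc : forall t, texp t -> lc t.
Proof. induction t using size_ind. intros Ht. inversion Ht; subst; intros k w; simpl.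
- auto.
- rewrite (H A), (H B); auto; simpl; lia.
- rewrite (H A); auto; simpl; lia.
- set (X := fresh (fv A)). destruct (H0 X (fresh_spec _)) as [H1 _].
  assert (lc (open A (tfvar X))). { apply H; auto. unfold open; rewrite size_open_rec; simpl; lia. }
  f_equal. eapply open_rec_lc_core with (j := 0); [lia|]. apply H2.
Qed.

Lemma tinfo_subst : forall t V u, tinfo t <> TFree -> tinfo (subst V u t) = tinfo t.
Proof. induction t; simpl; intros V u H.
- congruence.
- reflexivity.
- auto.
- destruct (tinfo t) eqn:E; try congruence; rewrite IHt; rewrite ?E; congruence.
- destruct (tinfo t) as [|[|k] g|g] eqn:E; try congruence; rewrite IHt; rewrite ?E; congruence.
Qed.

Lemma proper_notin : forall u Y, ~ In Y (fv u) -> proper Y u.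
Proof. induction u; simpl; intros Y H; auto.
- left; split; [apply IHu1|apply IHu2]; intro; apply H; apply in_or_app; auto.
Qed.

Lemma proper_subst : forall T Y V u, proper Y T -> ~ In Y (fv u) -> proper Y (subst V u T).
Proof. induction T; simpl; intros Y V u H H0; auto.
- destruct (Nat.eqb X V); simpl; auto. apply proper_notin; auto.
- destruct H as [[]|H]; [left; split; auto|right].
  unfold topvariant in *. rewrite tinfo_subst; congruence.
- destruct H as [H|H]; [left; auto|right].
  unfold topvariant in *. change (tmu (subst V u T)) with (subst V u (tmu T)).
  rewrite tinfo_subst; congruence.
Qed.

Lemma proper_rename : forall T W Z, proper W T -> ~ In Z (fv T) -> proper Z (subst W (tfvar Z) T).
Proof. induction T; simpl; intros W Z H H0; auto.
- destruct (Nat.eqb_spec X W); simpl; [congruence|]. intro; subst; auto.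
- destruct H as [[]|H]; [left; split; [apply IHT1|apply IHT2]; auto;
  intro; apply H0; apply in_or_app; auto|right].
  unfold topvariant in *. rewrite tinfo_subst; congruence.
- destruct H as [H|H]; [left; auto|right].
  unfold topvariant in *. change (tmu (subst W (tfvar Z) T)) with (subst W (tfvar Z) (tmu T)).
  rewrite tinfo_subst; congruence.
Qed.

Lemma texp_rename : forall t, texp t -> forall Z V, texp (subst Z (tfvar V) t).
Proof. induction t as [t IH] using size_ind. intros Ht Z V.
 inversion Ht as [X|A B HA HB|A HA|A H0]; subst; simpl.
- destruct (Nat.eqb X Z); constructor.
- constructor; apply IH; auto; simpl; lia.
- constructor; apply IH; auto; simpl; lia.
- destruct (in_dec Nat.eq_dec Z (fv A)) as [HZ|HZ];
   [| rewrite (subst_fresh A); auto].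
  destruct (Nat.eq_dec Z V) as [<-|HZV].
  { assert (forall t, subst Z (tfvar Z) t = t) as E.
    { intro s; induction s; simpl; try congruence. destruct (Nat.eqb_spec X Z); congruence. }
    rewrite E; auto. }
  constructor. intros Y HY.
  assert (HVY : Y <> V). { intro; subst; apply HY. apply fv_subst3; simpl; auto. }
  destruct (Nat.eq_dec Y Z) as [->|HYZ].
  + assert (HW := fresh_spec (Z :: V :: fv A)).
    remember (fresh (Z :: V :: fv A)) as W eqn:EW. clear EW. simpl in HW.
    destruct (H0 W) as [HW1 HW2]; [tauto|].
    set (T1 := subst Z (tfvar V) (open A (tfvar W))).
    assert (E1 : T1 = open (subst Z (tfvar V) A) (tfvar W)).
    { unfold T1, open. rewrite subst_open_rec by apply lc_var. simpl.
      destruct (Nat.eqb_spec W Z); [exfalso; apply HW; auto|reflexivity]. }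
    assert (E2 : open (subst Z (tfvar V) A) (tfvar Z) = subst W (tfvar Z) T1).
    { rewrite E1. unfold open. rewrite subst_open_var; auto.
      intro Hf. apply fv_subst in Hf. simpl in Hf. destruct Hf as [[]|[|[]]]; subst; tauto. }
    rewrite E2. split.
    * apply IH. unfold T1; rewrite size_subst_var; unfold open; rewrite size_open_rec; simpl; lia.
      apply IH; auto. unfold open; rewrite size_open_rec; simpl; lia.
    * apply proper_rename.
      -- unfold T1. apply proper_subst; auto. simpl; intros [|[]]; subst; tauto.
      -- unfold T1. intro Hf. apply fv_subst in Hf. simpl in Hf. destruct Hf as [[]|[|[]]]; subst; tauto.
  + assert (HYA : ~ In Y (fv A)). { intro; apply HY; apply fv_subst2; auto. }
    destruct (H0 Y HYA) as [HY1 HY2].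
    assert (E1 : open (subst Z (tfvar V) A) (tfvar Y) = subst Z (tfvar V) (open A (tfvar Y))).
    { unfold open. rewrite subst_open_rec by apply lc_var. simpl.
      destruct (Nat.eqb_spec Y Z); [congruence|reflexivity]. }
    rewrite E1. split.
    * apply IH; auto. unfold open; rewrite size_open_rec; simpl; lia.
    * apply proper_subst; auto. simpl; intros [|[]]; subst; tauto.
Qed.

Lemma texp_subst : forall t, texp t -> forall Z u, texp u -> texp (subst Z u t).
Proof. induction t as [t IH] using size_ind. intros Ht Z u Hu.
 assert (Hlc := texp_lc u Hu).
 inversion Ht as [X|A B HA HB|A HA|A H0]; subst; simpl.
- destruct (Nat.eqb X Z); auto; constructor.
- constructor; apply IH; auto; simpl; lia.
- constructor; apply IH; auto; simpl; lia.
- destruct (in_dec Nat.eq_dec Z (fv A)) as [HZ|HZ];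
   [| rewrite (subst_fresh A); auto].
  constructor. intros Y HY.
  assert (HVY : ~ In Y (fv u)). { intro; apply HY. apply fv_subst3; auto. }
  destruct (Nat.eq_dec Y Z) as [->|HYZ].
  + assert (HW := fresh_spec (Z :: fv u ++ fv A)).
    remember (fresh (Z :: fv u ++ fv A)) as W eqn:EW. clear EW. simpl in HW.
    assert (HWu : ~ In W (fv u)) by (intro; apply HW; right; apply in_or_app; auto).
    assert (HWA : ~ In W (fv A)) by (intro; apply HW; right; apply in_or_app; auto).
    destruct (H0 W) as [HW1 HW2]; [tauto|].
    set (T1 := subst Z u (open A (tfvar W))).
    assert (E1 : T1 = open (subst Z u A) (tfvar W)).
    { unfold T1, open. rewrite subst_open_rec by auto. simpl.
      destruct (Nat.eqb_spec W Z); [exfalso; apply HW; auto|reflexivity]. }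
    assert (E2 : open (subst Z u A) (tfvar Z) = subst W (tfvar Z) T1).
    { rewrite E1. unfold open. rewrite subst_open_var; auto.
      intro Hf. apply fv_subst in Hf. destruct Hf as [[]|]; tauto. }
    rewrite E2. split.
    * apply texp_rename. apply IH; auto. unfold open; rewrite size_open_rec; simpl; lia.
    * apply proper_rename.
      -- unfold T1. apply proper_subst; auto.
      -- unfold T1. intro Hf. apply fv_subst in Hf. destruct Hf as [[]|]; tauto.
  + assert (HYA : ~ In Y (fv A)). { intro; apply HY; apply fv_subst2; auto. }
    destruct (H0 Y HYA) as [HY1 HY2].
    assert (E1 : open (subst Z u A) (tfvar Y) = subst Z u (open A (tfvar Y))).
    { unfold open. rewrite subst_open_rec by auto. simpl.
      destruct (Nat.eqb_spec Y Z); [congruence|reflexivity]. }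
    rewrite E1. split.
    * apply IH; auto. unfold open; rewrite size_open_rec; simpl; lia.
    * apply proper_subst; auto.
Qed.

Lemma texp_top : texp top.
Proof. constructor. intros X _. unfold open; simpl. split; [constructor; constructor|exact I]. Qed.

Lemma teq_subst : forall d A B, teq d A B -> forall X, teq d (subst X top A) (subst X top B).
Proof. induction 1; intros X; simpl.
- apply teq_refl. apply texp_subst; auto using texp_top.
- apply teq_sym; auto.
- eapply teq_trans; eauto.
- apply teq_bul; auto.
- apply teq_arr; auto.
- apply teq_arrtop. apply texp_subst; auto using texp_top.
- unfold open. rewrite subst_open_rec by apply lc_top. apply teq_unfold.
  apply (texp_subst _ H X top texp_top).
- apply teq_contract. apply (texp_subst _ H X top texp_top).
  specialize (IHteq X). unfold open in IHteq. rewrite subst_open_rec in IHteq by apply lc_top. exact IHteq.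
- apply teq_dist; auto; apply texp_subst; auto using texp_top.
Qed.

Lemma cong_sim : forall d A B, teq false A B -> teq d A B.
Proof. induction 1; try (econstructor; eauto; fail). discriminate. Qed.

Inductive obsr := OFin (n Y : nat) | OInf | OBd (k n : nat).
Definition bump r := match r with OFin n Y => OFin (S n) Y | OInf => OInf | OBd k n => OBd k (S n) end.
Definition mudrop r := match r with OBd 0 _ => OInf | OBd (S k) n => OBd k n | r => r end.
Fixpoint obs t := match t with
 | tfvar Y => OFin 0 Y | tbvar k => OBd k 0 | tarr _ B => obs B
 | tbul A => bump (obs A) | tmu A => mudrop (obs A) end.
Definition addb n r := match r with OFin m Y => OFin (n+m) Y | OInf => OInf | OBd k m => OBd k (n+m) end.
Definition nbd r := match r with OBd _ _ => False | _ => True end.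

Lemma obs_open : forall t k u, nbd (obs u) ->
  obs (open_rec k u t) = match obs t with OBd j n => if Nat.eqb j k then addb n (obs u) else OBd j n | r => r end.
Proof. induction t; simpl; intros k u Hu.
- reflexivity.
- destruct (Nat.eqb i k); [destruct (obs u); reflexivity|reflexivity].
- auto.
- rewrite IHt by auto. destruct (obs t) as [| |j n]; simpl; auto.
  destruct (Nat.eqb j k); simpl; auto. destruct (obs u); reflexivity.
- rewrite IHt by auto. destruct (obs t) as [| |[|j] n]; simpl; auto.
  destruct (Nat.eqb j k); simpl; auto. destruct (obs u); simpl in *; tauto.
Qed.

Lemma obs_open_var : forall t Y, obs (open t (tfvar Y)) =
  match obs t with OBd 0 n => OFin n Y | r => r end.
Proof. intros. unfold open. rewrite obs_open by exact I.
  destruct (obs t) as [| |[|j] n]; simpl; auto; rewrite Nat.add_0_r; auto. Qed.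

Lemma texp_nbd : forall t, texp t -> nbd (obs t).
Proof. induction t as [t IH] using size_ind. intros Ht.
 inversion Ht as [X|A B HA HB|A HA|A H0]; subst; simpl.
- exact I.
- apply IH; auto; simpl; lia.
- assert (H := IH A ltac:(simpl; lia) HA). destruct (obs A); simpl in *; auto.
- assert (HW := fresh_spec (fv A)). destruct (H0 _ HW) as [H1 _].
  assert (H2 := IH (open A (tfvar (fresh (fv A)))) ltac:(unfold open; rewrite size_open_rec; simpl; lia) H1).
  rewrite obs_open_var in H2. destruct (obs A) as [| |[|j] n]; simpl in *; auto.
Qed.

Lemma obs_fin_fv : forall t n Z, obs t = OFin n Z -> In Z (fv t).
Proof. induction t; simpl; intros n Z H.
- injection H; auto.
- discriminate.
- apply in_or_app; right; eauto.
- destruct (obs t) eqn:E; simpl in H; try discriminate. injection H; intros; subst; eauto.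
- destruct (obs t) as [| |[|j] m] eqn:E; simpl in H; try discriminate. injection H; intros; subst; eauto.
Qed.

Lemma tinfo_fin : forall t n Z, obs t = OFin n Z -> tinfo t = TFree.
Proof. induction t; simpl; intros n Z H.
- reflexivity.
- discriminate.
- eauto.
- destruct (obs t) eqn:E; simpl in H; try discriminate. erewrite IHt; eauto.
- destruct (obs t) as [| |[|j] m] eqn:E; simpl in H; try discriminate. erewrite IHt; eauto.
Qed.

Lemma proper_obs : forall t X, proper X t -> obs t <> OFin 0 X.
Proof. induction t; simpl; intros V H.
- congruence.
- discriminate.
- destruct H as [[]|H]; auto. unfold topvariant in H. intro E.
  rewrite (tinfo_fin _ _ _ E) in H. discriminate.
- destruct (obs t); simpl; discriminate.
- destruct H as [H|H].
  + specialize (IHt _ H). destruct (obs t) as [| |[|j] m]; simpl; congruence.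
  + unfold topvariant in H. intro E. rewrite (tinfo_fin (tmu t) 0 V E) in H. discriminate.
Qed.

Lemma mu_struct : forall C, texp (tmu C) ->
  (forall k n, obs C <> OBd (S k) n) /\ (forall n, obs C = OBd 0 n -> n <> 0).
Proof. intros C H. inversion H as [| | |A H0]; subst.
 assert (HW := fresh_spec (fv C)). destruct (H0 _ HW) as [H1 H2].
 assert (H3 := texp_nbd _ H1). assert (H4 := proper_obs _ _ H2).
 rewrite obs_open_var in H3, H4. split.
 - intros k n E. rewrite E in H3. exact H3.
 - intros n E ->. rewrite E in H4. auto.
Qed.

Lemma obs_top : obs top = OInf. Proof. reflexivity. Qed.

Lemma teq_obs : forall d A B, teq d A B -> obs A = obs B /\ nbd (obs A).
Proof. induction 1.
- split; auto. apply texp_nbd; auto.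
- destruct IHteq as [e n]; split; [auto|rewrite <- e; auto].
- destruct IHteq1 as [e1 n1], IHteq2 as [e2 n2]; split; congruence.
- destruct IHteq as [e n]; simpl; rewrite e; split; auto. rewrite <- e; destruct (obs A); simpl in *; auto.
- destruct IHteq2 as [e n]; simpl; auto.
- simpl. split; [reflexivity|exact I].
- assert (Hn := texp_nbd _ H). destruct (mu_struct _ H) as [M1 M2].
  unfold open. rewrite obs_open by auto. split; auto.
  simpl in *. destruct (obs A) as [| |[|j] m] eqn:E; simpl; auto.
  + exfalso; eapply M1; eauto.
- assert (Hn := texp_nbd _ H). destruct (mu_struct _ H) as [M1 M2].
  destruct IHteq as [e n]. split; auto. unfold open in e. rewrite obs_open in e by auto.
  simpl. destruct (obs C) as [| |[|j] m] eqn:E; simpl in *; auto.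
  + specialize (M2 m eq_refl). destruct (obs A) eqn:EA; simpl in *; try tauto.
    injection e; intros; lia.
  + exfalso; eapply M1; eauto.
- assert (Hn := texp_nbd _ H1). simpl. split; auto. destruct (obs B); simpl in *; auto.
Qed.

Inductive clos (g : list (nat*nat)) : nat -> nat -> Prop :=
| cl_refl Z : clos g Z Z
| cl_step Z W Z' : In (Z,W) g -> clos g W Z' -> clos g Z Z'.

Lemma clos_trans g a b c : clos g a b -> clos g b c -> clos g a c.
Proof. induction 1; intros; auto. eapply cl_step; eauto. Qed.

Lemma clos_mono g h a b : (forall p, In p g -> In p h) -> clos g a b -> clos h a b.
Proof. intros Hi. induction 1. constructor. eapply cl_step; eauto. Qed.

Lemma in_ftv g X Y : In (X,Y) g -> In X (ftv g) /\ In Y (ftv g).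
Proof. unfold ftv; intros; split; apply in_flat_map; exists (X,Y); simpl; auto. Qed.

Lemma stuck g g' X Y : ~ In X (ftv g) -> ~ In Y (ftv g) -> is_union g' g [(X,Y)] ->
  forall W Z, clos g' W Z -> (W = X \/ W = Y) -> Z = X \/ Z = Y.
Proof. intros HX HY U W Z. induction 1 as [|Z0 W0 Z' Hin Hc IH]; intros HW; auto.
 apply IH. apply U in Hin. destruct Hin as [Hin|[Hin|[]]].
 - apply in_ftv in Hin. destruct HW; subst; tauto.
 - injection Hin; intros; subst. auto.
Qed.

Lemma escape g g' X Y : ~ In X (ftv g) -> ~ In Y (ftv g) -> is_union g' g [(X,Y)] ->
  forall Z Z', clos g' Z Z' -> Z' <> X -> Z' <> Y -> clos g Z Z'.
Proof. intros HX HY U Z Z'. induction 1 as [|Z0 W0 Z' Hin Hc IH]; intros H1 H2.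
 - constructor.
 - apply cl_step with W0; auto. apply U in Hin. destruct Hin as [Hin|[Hin|[]]]; auto.
   injection Hin as E1 E2; subst Z0 W0.
   destruct (stuck g g' X Y HX HY U Y Z' Hc (or_intror eq_refl)); congruence.
Qed.

Lemma sub_obs : forall g A B, sub g A B ->
  (obs A = OInf -> obs B = OInf) /\
  (forall n Z, obs A = OFin n Z -> obs B = OInf \/ exists m Z', obs B = OFin m Z' /\ clos g Z Z').
Proof. induction 1 as [g X Y wf Hin|g A wf HA|g A B wf Heq
  |g g1 g2 A B C S1 [I1 F1] S2 [I2 F2] wf U|g A B Sb [I F]
  |g g1 g2 A A' B B' S1 _ S2 [I2 F2] wf U
  |g g' a b X Y HXa HYb HXg HXb HYg HYa pa pb wf U Sm [I F]|g A wf HA].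
- split; simpl; intros. discriminate. injection H; intros; subst.
  right; exists 0, Y; split; auto. eapply cl_step; eauto. constructor.
- split; intros; [reflexivity | left; reflexivity].
- destruct (teq_obs _ _ _ Heq) as [e _]. rewrite <- e. split; auto.
  intros n Z E; right; exists n, Z; split; auto; constructor.
- split; auto. intros n Z E. destruct (F1 n Z E) as [E1|[m [Z' [E1 C1]]]]; auto.
  destruct (F2 m Z' E1) as [E2|[m' [Z'' [E2 C2]]]]; auto.
  right; exists m', Z''; split; auto. eapply clos_trans.
  + eapply clos_mono; [|exact C1]. intros p Hp; apply U; auto.
  + eapply clos_mono; [|exact C2]. intros p Hp; apply U; auto.
- simpl. split.
  + intros E. destruct (obs A) eqn:EA; simpl in E; try discriminate. rewrite I; auto.
  + intros n Z E. destruct (obs A) eqn:EA; simpl in E; try discriminate. injection E; intros; subst.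
    destruct (F _ _ eq_refl) as [->|[m [Z' [-> Hc]]]]; auto. right; exists (S m), Z'; auto.
- simpl. split; auto. intros n Z E. destruct (F2 n Z E) as [E2|[m [Z' [E2 C2]]]]; auto.
  right; exists m, Z'; split; auto. eapply clos_mono; [|exact C2]. intros p Hp; apply U; auto.
- assert (Ea := obs_open_var a X). assert (Eb := obs_open_var b Y).
  assert (HbY : forall m Z, obs b = OFin m Z -> Z <> Y /\ Z <> X).
  { intros m Z E. assert (Hz := obs_fin_fv _ _ _ E). split; intro; subst; auto.
    apply HXb. apply fv_open_sub; auto. }
  assert (Concl : forall m Z, obs (open b (tfvar Y)) = OFin m Z -> Z <> X).
  { intros m Z E ->. apply HXb. eapply obs_fin_fv; eauto. }
  simpl. split.
  + intros Ha. destruct (obs a) as [n0 Z0| |[|k] n0] eqn:EA; simpl in Ha; try discriminate.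
    * specialize (I Ea). rewrite I in Eb.
      destruct (obs b) as [| |[|k] m]; simpl in *; congruence.
    * destruct (F n0 X Ea) as [Hi|[m [Z' [Ho Hc]]]].
      -- rewrite Hi in Eb. destruct (obs b) as [| |[|k] m]; simpl in *; congruence.
      -- destruct (stuck g g' X Y HXg HYg U X Z' Hc (or_introl eq_refl)) as [->| ->].
         ++ exfalso. eapply Concl; eauto.
         ++ rewrite Ho in Eb. destruct (obs b) as [m1 W| |[|k] m1] eqn:EB; simpl in *; try congruence.
            injection Eb; intros; subst. destruct (HbY _ _ eq_refl); congruence.
  + intros n Z Ha. destruct (obs a) as [n0 Z0| |[|k] n0] eqn:EA; simpl in Ha; try discriminate.
    injection Ha; intros; subst.
    destruct (F n Z Ea) as [Hi|[m [Z' [Ho Hc]]]].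
    * rewrite Hi in Eb. left. destruct (obs b) as [| |[|k] m]; simpl in *; congruence.
    * rewrite Ho in Eb. destruct (obs b) as [m1 W| |[|k] m1] eqn:EB; simpl in *; try congruence.
      -- injection Eb as E1 E2. subst m1 W. destruct (HbY _ _ eq_refl).
         right; exists m, Z'; split; auto. eapply (escape g g' X Y); eauto.
      -- left; reflexivity.
- simpl. split.
  + intros E; rewrite E; reflexivity.
  + intros n Z E; right; exists (S n), Z; rewrite E; split; [reflexivity|constructor].
Qed.

Lemma top_bul : forall d, teq d top (tbul top).
Proof. intros d. exact (teq_unfold d (tbul (tbvar 0)) texp_top). Qed.

Lemma completeness : forall t, texp t -> forall X,
  (obs t = OInf \/ exists n, obs t = OFin n X) -> tcong (subst X top t) top.
Proof. induction t as [t IH] using size_ind. intros Ht X Ho.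
 inversion Ht as [V|A B HA HB|A HA|A H0]; subst; simpl in *.
- destruct Ho as [Ho|[n Ho]]; try discriminate. injection Ho; intros; subst.
  rewrite Nat.eqb_refl. apply teq_refl, texp_top.
- eapply teq_trans.
  + apply teq_arr; [apply teq_refl; apply texp_subst; auto using texp_top|].
    apply IH; auto. simpl; lia.
  + apply teq_arrtop. apply texp_subst; auto using texp_top.
- eapply teq_trans; [apply teq_bul; apply IH; auto; simpl; try lia|apply teq_sym, top_bul].
  destruct (obs A) eqn:E; simpl in Ho; destruct Ho as [Ho|[n' Ho]]; try discriminate; auto.
  injection Ho; intros; subst; eauto.
- assert (HtS := texp_subst _ Ht X top texp_top). simpl in HtS.
  apply teq_sym. apply teq_contract; auto. apply teq_sym.
  assert (HY := fresh_spec (X :: fv A)).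
  remember (fresh (X :: fv A)) as Y eqn:EY. clear EY. simpl in HY.
  destruct (H0 Y) as [HY1 _]; [tauto|].
  assert (Hsz : size (open A (tfvar Y)) < size (tmu A)) by (unfold open; rewrite size_open_rec; simpl; lia).
  assert (EO := obs_open_var A Y).
  assert (HYA' : ~ In Y (fv (subst X top A))).
  { intro Hf. apply fv_subst in Hf. simpl in Hf. destruct Hf as [[]|[]]. tauto. }
  destruct (obs A) as [n Z| |[|k] n] eqn:EA; simpl in Ho.
  + specialize (IH _ Hsz HY1 X ltac:(right; exists n; destruct Ho as [Ho|[n' Ho]]; congruence)).
    pose proof (teq_subst _ _ _ IH Y) as IH2; clear IH; rename IH2 into IH. simpl in IH.
    unfold open in IH. rewrite subst_open_rec in IH by apply lc_top. simpl in IH.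
    destruct (Nat.eqb_spec Y X); [exfalso; apply HY; auto|]. rewrite subst_open_var in IH; auto.
  + specialize (IH _ Hsz HY1 X ltac:(left; auto)).
    pose proof (teq_subst _ _ _ IH Y) as IH2; clear IH; rename IH2 into IH. simpl in IH.
    unfold open in IH. rewrite subst_open_rec in IH by apply lc_top. simpl in IH.
    destruct (Nat.eqb_spec Y X); [exfalso; apply HY; auto|]. rewrite subst_open_var in IH; auto.
  + specialize (IH _ Hsz HY1 Y ltac:(right; exists n; auto)).
    unfold open in IH. rewrite subst_open_var in IH by tauto.
    pose proof (teq_subst _ _ _ IH X) as IH2; clear IH; rename IH2 into IH. simpl in IH.
    rewrite subst_open_rec in IH by apply lc_top. exact IH.
  + destruct Ho as [Ho|[n' Ho]]; discriminate.
Qed.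

Theorem proposition5 (g : list (nat * nat)) (A : ty) :
  texp A -> sub g top A -> tcong A top /\ tsim A top.
Proof.
  intros HA Hs. destruct (sub_obs _ _ _ Hs) as [I _].
  assert (HI : obs A = OInf) by (apply I; reflexivity).
  assert (HX := fresh_spec (fv A)).
  assert (Hc := completeness A HA (fresh (fv A)) (or_introl HI)).
  rewrite subst_fresh in Hc by auto.
  split; auto. apply cong_sim; auto.
Qed.
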